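(* Let ${\cal H}_1=(V_1,{\cal E}_1)$ and ${\cal H}_2=(V_2,{\cal E}_2)$ be vertex-disjoint $1$-Sperner hypergraphs and let $z\notin V_1\cup V_2$. Then the gluing ${\cal H}_1\odot{\cal H}_2$ is a $1$-Sperner hypergraph, unless ${\cal E}_1=\{V_1\}$ and ${\cal E}_2=\{\emptyset\}$, in which case ${\cal H}_1\odot{\cal H}_2$ is not Sperner.
   Context: A hypergraph ${\cal H}=(V,{\cal E})$ consists of a finite vertex set $V$ and a set ${\cal E}$ of subsets of $V$ (hyperedges). It is Sperner if no hyperedge properly contains another, and $1$-Sperner if every two distinct hyperedges $e,f$ satisfy $\min\{|e\setminus f|,|f\setminus e|\}=1$ (in particular every hypergraph with at most one hyperedge is $1$-Sperner). Given vertex-disjoint hypergraphs ${\cal H}_1=(V_1,{\cal E}_1)$, ${\cal H}_2=(V_2,{\cal E}_2)$ and a new vertex $z\notin V_1\cup V_2$, the gluing ${\cal H}_1\odot{\cal H}_2$ is the hypergraph with vertex set $V_1\cup V_2\cup\{z\}$ and hyperedge set $\{\{z\}\cup e: e\in{\cal E}_1\}\cup\{V_1\cup e: e\in{\cal E}_2\}$. *)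

(* Defs.v *)
From mathcomp Require Import all_boot.
Set Implicit Arguments. Unset Strict Implicit. Unset Printing Implicit Defensive.

Definition is_hypergraph (T : finType) (V : {set T}) (E : {set {set T}}) : Prop :=
  forall e, e \in E -> e \subset V.

Definition sperner (T : finType) (E : {set {set T}}) : Prop :=
  forall e f, e \in E -> f \in E -> ~ (e \proper f).

Definition one_sperner (T : finType) (E : {set {set T}}) : Prop :=
  forall e f, e \in E -> f \in E -> e != f ->
    minn #|e :\: f| #|f :\: e| = 1.

Definition glue_vertices (T : finType) (V1 V2 : {set T}) (z : T) : {set T} :=
  V1 :|: V2 :|: [set z].

Definition glue_edges (T : finType) (V1 : {set T}) (E1 E2 : {set {set T}}) (z : T)
  : {set {set T}} :=
  [set z |: e | e in E1] :|: [set V1 :|: e | e in E2].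

(* Main.v *)
Require Import Defs.
From mathcomp Require Import all_boot.

Lemma only_edge (T : finType) (V : {set T}) (E : {set {set T}}) (e0 : {set T}) :
  is_hypergraph V E -> one_sperner E -> e0 \in E ->
  (V \subset e0 \/ e0 \subset set0) -> E = [set e0].
Proof.
move=> hE hS he0 hc; apply/setP=> e; rewrite inE.
apply/idP/eqP; last by move->.
move=> he; apply/eqP; apply/negPn/negP=> ne.
have := hS e e0 he he0 ne.
case: hc => hc.
  have -> : e :\: e0 = set0.
    apply/setP=> x; rewrite !inE; apply/negP=> /andP[xn xe].
    by move/negP: xn; apply; apply: (subsetP hc); apply: (subsetP (hE e he)).
  by rewrite cards0 min0n.
have -> : e0 :\: e = set0.
    apply/setP=> x; rewrite !inE; apply/negP=> /andP[_ xe].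
    by have := subsetP hc x xe; rewrite inE.
  by rewrite cards0 minn0.
Qed.

Theorem proposition2 (T : finType) (V1 V2 : {set T}) (E1 E2 : {set {set T}}) (z : T) :
  is_hypergraph V1 E1 -> is_hypergraph V2 E2 ->
  [disjoint V1 & V2] ->
  z \notin V1 :|: V2 ->
  one_sperner E1 -> one_sperner E2 ->
  is_hypergraph (glue_vertices V1 V2 z) (glue_edges V1 E1 E2 z) /\
  (~ (E1 = [set V1] /\ E2 = [set set0]) -> one_sperner (glue_edges V1 E1 E2 z)) /\
  (E1 = [set V1] /\ E2 = [set set0] -> ~ sperner (glue_edges V1 E1 E2 z)).
Proof.
move=> h1 h2 dis hz s1 s2.
have zV1 : z \notin V1 by move: hz; rewrite inE negb_or => /andP[].
have zV2 : z \notin V2 by move: hz; rewrite inE negb_or => /andP[].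
have nzV1 : forall e, e \in E1 -> z \notin e.
  by move=> e he; apply/negP=> /(subsetP (h1 e he)); rewrite (negbTE zV1).
have nzV2 : forall e, e \in E2 -> z \notin e.
  by move=> e he; apply/negP=> /(subsetP (h2 e he)); rewrite (negbTE zV2).
have d12 : forall f x, f \in E2 -> x \in V1 -> x \notin f.
  move=> f x hf xV; apply/negP=> /(subsetP (h2 f hf)) xV2.
  by move: dis; rewrite disjoint_subset => /subsetP/(_ x xV); rewrite inE xV2.
have mixed : forall e f, e \in E1 -> f \in E2 ->
    ~ (E1 = [set V1] /\ E2 = [set set0]) ->
    minn #|(z |: e) :\: (V1 :|: f)| #|(V1 :|: f) :\: (z |: e)| = 1 /\
    minn #|(V1 :|: f) :\: (z |: e)| #|(z |: e) :\: (V1 :|: f)| = 1.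
  move=> e f he hf nc.
  have -> : (z |: e) :\: (V1 :|: f) = [set z].
    apply/setP=> x; rewrite !inE.
    case: (eqVneq x z) => [->|xz] /=.
      by rewrite (negbTE zV1) (negbTE (nzV2 f hf)).
    case xe: (x \in e); last by rewrite !andbF.
    by rewrite (subsetP (h1 e he) x xe).
  rewrite cards1.
  have pos : 0 < #|(V1 :|: f) :\: (z |: e)|.
    rewrite card_gt0; apply/negP=> /eqP h0; apply: nc.
    have sV : V1 \subset e.
      apply/subsetP=> x xV; apply/negPn/negP=> xe.
      have : x \in (V1 :|: f) :\: (z |: e).
        rewrite !inE xV /= (negbTE xe) andbT.
        by rewrite orbF; apply/negP=> /eqP xz; move: zV1; rewrite -xz xV.
      by rewrite h0 inE.
    have sf : f \subset set0.
      apply/subsetP=> x xf.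
      have : x \in (V1 :|: f) :\: (z |: e).
        rewrite !inE xf orbT andbT negb_or.
        apply/andP; split.
          by apply/negP=> /eqP xz; move: (nzV2 f hf); rewrite -xz xf.
        by apply/negP=> /(subsetP (h1 e he)) xV; move: (d12 f x hf xV); rewrite xf.
      by rewrite h0 inE.
    have eV : e = V1 by apply/eqP; rewrite eqEsubset sV h1.
    split; first by apply: (@only_edge _ _ _ _ h1 s1); [rewrite -eV | left].
    have -> : set0 = f by apply/eqP; rewrite eq_sym -subset0.
    by apply: (@only_edge _ _ _ _ h2 s2) => //; right.
  by split; [apply/minn_idPl | apply/minn_idPr].
split.
  move=> g; rewrite /glue_edges inE => /orP[] /imsetP[e he ->];
  apply/subsetP=> x; rewrite /glue_vertices !inE.
    by case/orP=> [->|/(subsetP (h1 e he)) ->]; rewrite ?orbT.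
  by case/orP=> [->|/(subsetP (h2 e he)) ->]; rewrite ?orbT.
split.
  move=> nc g g'; rewrite /glue_edges !inE.
  case/orP=> /imsetP[e he ->]; case/orP=> /imsetP[e' he' ->] ne.
  - have -> : (z |: e) :\: (z |: e') = e :\: e'.
      apply/setP=> x; rewrite !inE; case: (eqVneq x z) => [->|xz].
        by rewrite /= (negbTE (nzV1 e he)) andbF.
      by [].
    have -> : (z |: e') :\: (z |: e) = e' :\: e.
      apply/setP=> x; rewrite !inE; case: (eqVneq x z) => [->|xz].
        by rewrite /= (negbTE (nzV1 e' he')) andbF.
      by [].
    by apply: s1 => //; apply: contraNneq ne => ->.
  - by case: (mixed e e' he he' nc).
  - by case: (mixed e' e he' he nc).
  - have key : forall a b, a \in E2 -> (V1 :|: a) :\: (V1 :|: b) = a :\: b.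
      move=> a b ha; apply/setP=> x; rewrite !inE.
      case xV: (x \in V1) => /=; last by [].
      by rewrite (negbTE (d12 a x ha xV)) andbF.
    rewrite !key //.
    by apply: s2 => //; apply: contraNneq ne => ->.
move=> [-> ->] hs.
apply: (hs V1 (z |: V1)).
- by rewrite /glue_edges !inE; apply/orP; right; apply/imsetP; exists set0;
  rewrite ?inE ?setU0.
- by rewrite /glue_edges !inE; apply/orP; left; apply/imsetP; exists V1; rewrite ?inE.
- rewrite properE subsetUr /=; apply/subsetP=> /(_ z); rewrite !inE eqxx /=.
  by move=> /(_ isT); apply/negP.
Qed.
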